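(* Assume the standing conventions of the context and suppose $\mathcal D_{Z,Z'}\neq\emptyset$. (i) If $\Lambda\in\overline{\mathcal S}_Z$ and $\Lambda'_0\in B^+_\Lambda$, then $B^+_\Lambda=\{\Lambda'_0+\Lambda'\mid \Lambda'\in D_Z\}$. (ii) If $\Lambda'\in\overline{\mathcal S}_{Z'}$ and $\Lambda_0\in B^+_{\Lambda'}$, then $B^+_{\Lambda'}=\{\Lambda_0+\Lambda\mid\Lambda\in D_{Z'}\}$.
   Context: A symbol is an array $\Lambda=\binom{a'_1,\ldots,a'_{m_1}}{b'_1,\ldots,b'_{m_2}}$ of two strictly decreasing finite sequences of nonnegative integers (top row, bottom row); its defect is $\mathrm{def}(\Lambda)=m_1-m_2$. Standing assumptions: $Z=\binom{a_1,\ldots,a_{m+1}}{b_1,\ldots,b_m}$ is a special symbol of defect $1$, i.e. $a_1\ge b_1\ge a_2\ge b_2\ge\cdots\ge b_m\ge a_{m+1}$; $Z'=\binom{c_1,\ldots,c_{m'}}{d_1,\ldots,d_{m'}}$ is a special symbol of defect $0$, i.e. $c_1\ge d_1\ge c_2\ge d_2\ge\cdots\ge c_{m'}\ge d_{m'}$; and $m'\in\{m,m+1\}$. For a symbol $Y$, $Y_{\mathrm I}$ is the set of entries of $Y$ occurring in exactly one row. For $M\subset Z_{\mathrm I}$, $\Lambda_M$ is the symbol obtained from $Z$ by moving every entry of $M$ to the other row (rows re-sorted decreasingly); for $N\subset Z'_{\mathrm I}$, $\Lambda_N$ is obtained from $Z'$ in the same way. $\overline{\mathcal S}_Z=\{\Lambda_M: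 M\subset Z_{\mathrm I}\}$, $\overline{\mathcal S}_{Z'}=\{\Lambda_N:N\subset Z'_{\mathrm I}\}$; $\mathcal S_{Z,1}$ (resp. $\mathcal S_{Z',0}$) is the set of elements of $\overline{\mathcal S}_Z$ of defect $1$ (resp. of $\overline{\mathcal S}_{Z'}$ of defect $0$). Sum: $\Lambda_{M_1}+\Lambda_{M_2}:=\Lambda_{(M_1\cup M_2)\smallsetminus(M_1\cap M_2)}$ (for subsets of $Z_{\mathrm I}$, and likewise of $Z'_{\mathrm I}$). Relation $\overline{\mathcal B}^+_{Z,Z'}\subset\overline{\mathcal S}_Z\times\overline{\mathcal S}_{Z'}$: for $\Lambda=\binom{a'_1,\ldots,a'_{m_1}}{b'_1,\ldots,b'_{m_2}}\in\overline{\mathcal S}_Z$ and $\Lambda'=\binom{c'_1,\ldots,c'_{m'_1}}{d'_1,\ldots,d'_{m'_2}}\in\overline{\mathcal S}_{Z'}$, $(\Lambda,\Lambda')\in\overline{\mathcal B}^+_{Z,Z'}$ iff $\mathrm{def}(\Lambda')=1-\mathrm{def}(\Lambda)$ and: if $m'=m$, $a'_i>d'_i\ge a'_{i+1}$ for $1\le i\le m'_2$ and $b'_{i-1}>c'_i\ge b'_i$ for $1\le i\le m'_1$; if $m'=m+1$, $a'_i\ge d'_i>a'_{i+1}$ for $1\le i\le m'_2$ and $b'_{i-1}\ge c'_i>b'_i$ for $1\le i\le m'_1$; here $b'_0=+\infty$ and nonexistent entries $a'_j,b'_j$ beyond the row lengths are $-\infty$. Then $\mathcal D_{Z,Z'}=\overline{\mathcal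 B}^+_{Z,Z'}\cap(\mathcal S_{Z,1}\times\mathcal S_{Z',0})$, $D_Z=\{\Lambda'\mid (Z,\Lambda')\in\mathcal D_{Z,Z'}\}$, $D_{Z'}=\{\Lambda\mid(\Lambda,Z')\in\mathcal D_{Z,Z'}\}$, and for $\Lambda\in\overline{\mathcal S}_Z$, $\Lambda'\in\overline{\mathcal S}_{Z'}$: $B^+_\Lambda=\{\Lambda''\in\overline{\mathcal S}_{Z'}\mid(\Lambda,\Lambda'')\in\overline{\mathcal B}^+_{Z,Z'}\}$ and $B^+_{\Lambda'}=\{\Lambda''\in\overline{\mathcal S}_{Z}\mid(\Lambda'',\Lambda')\in\overline{\mathcal B}^+_{Z,Z'}\}$. *)

(* Defs.v *)
From mathcomp Require Import all_boot all_order all_algebra.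
Import GRing.Theory.
Set Implicit Arguments. Unset Strict Implicit. Unset Printing Implicit Defensive.

(* A symbol: (top row, bottom row), each a sequence of naturals which is
   meant to be strictly decreasing. *)
Definition symbol := (seq nat * seq nat)%type.

Definition sdecr (s : seq nat) : bool := sorted (fun x y => y < x) s.

Definition defect (L : symbol) : int := (size L.1)%:Z - (size L.2)%:Z.

Definition inI (Y : symbol) (x : nat) : bool := (x \in Y.1) != (x \in Y.2).

Definition moveS (Y : symbol) (M : seq nat) : symbol :=
  (sort geq ([seq x <- Y.1 | x \notin M] ++ [seq x <- Y.2 | x \in M]),
   sort geq ([seq x <- Y.2 | x \notin M] ++ [seq x <- Y.1 | x \in M])).

Definition inSbar (Y : symbol) (L : symbol) : Prop :=
  exists M : seq nat, all (inI Y) M /\ L = moveS Y M.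

(* symmetric difference of subsets (the sum Lambda_M1 + Lambda_M2 is
   Lambda_(symdiff M1 M2)) *)
Definition symdiff (M1 M2 : seq nat) : seq nat :=
  [seq x <- M1 ++ M2 | (x \in M1) != (x \in M2)].

Inductive ext := NegInf | Fin of nat | PosInf.

Definition ext_le (x y : ext) : bool :=
  match x, y with
  | NegInf, _ => true
  | _, PosInf => true
  | Fin a, Fin b => a <= b
  | _, _ => false
  end.
Definition ext_lt (x y : ext) : bool := ~~ ext_le y x.

(* the (j+1)-th entry of a row (0-based index j), -oo if nonexistent *)
Definition entry (s : seq nat) (j : nat) : ext :=
  if j < size s then Fin (nth 0 s j) else NegInf.

(* b'_{j} in 1-based indexing, i.e. b'_0 = +oo *)
Definition prev_entry (s : seq nat) (j : nat) : ext :=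
  if j is j'.+1 then entry s j' else PosInf.

(* The relation Bbar^+_{Z,Z'}; it depends on Z, Z' via m = #bottom(Z),
   m' = #top(Z'). Indices are 0-based: j stands for i = j+1. *)
Definition Bplus (Z Z' : symbol) (L L' : symbol) : Prop :=
  let m := size Z.2 in let m' := size Z'.1 in
  let a := L.1 in let b := L.2 in let c := L'.1 in let d := L'.2 in
  (defect L' = 1 - defect L)%R /\
  if m' == m then
    (forall j, j < size d ->
       ext_lt (Fin (nth 0 d j)) (entry a j) /\
       ext_le (entry a j.+1) (Fin (nth 0 d j))) /\
    (forall j, j < size c ->
       ext_lt (Fin (nth 0 c j)) (prev_entry b j) /\
       ext_le (entry b j) (Fin (nth 0 c j)))
  else
    (forall j, j < size d ->
       ext_le (Fin (nth 0 d j)) (entry a j) /\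
       ext_lt (entry a j.+1) (Fin (nth 0 d j))) /\
    (forall j, j < size c ->
       ext_le (Fin (nth 0 c j)) (prev_entry b j) /\
       ext_lt (entry b j) (Fin (nth 0 c j))).

Definition Drel (Z Z' : symbol) (L L' : symbol) : Prop :=
  (inSbar Z L /\ (defect L = 1)%R) /\ (inSbar Z' L' /\ (defect L' = 0)%R) /\
  Bplus Z Z' L L'.

Definition special1 (Z : symbol) : Prop :=
  sdecr Z.1 /\ sdecr Z.2 /\ size Z.1 = (size Z.2).+1 /\
  (forall i, i < size Z.2 ->
     nth 0 Z.2 i <= nth 0 Z.1 i /\ nth 0 Z.1 i.+1 <= nth 0 Z.2 i).

Definition special0 (Z' : symbol) : Prop :=
  sdecr Z'.1 /\ sdecr Z'.2 /\ size Z'.1 = size Z'.2 /\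
  (forall i, i < size Z'.2 -> nth 0 Z'.2 i <= nth 0 Z'.1 i) /\
  (forall i, i.+1 < size Z'.1 -> nth 0 Z'.1 i.+1 <= nth 0 Z'.2 i).

(* Main.v *)
Require Import Defs.
From mathcomp Require Import all_boot all_order all_algebra.
From mathcomp Require Import zify.
Set Implicit Arguments. Unset Strict Implicit. Unset Printing Implicit Defensive.

Definition upward (P : pred nat) := forall x y, x <= y -> P x -> P y.

Lemma geq_trans' : transitive geq.
Proof. move=> x y z /= h1 h2; exact: leq_trans h2 h1. Qed.

Lemma sorted_geq_le x s : sorted geq (x :: s) -> forall y, y \in s -> y <= x.
Proof.
move=> /= h y hy. have := order_path_min geq_trans' h. move/allP/(_ y hy). by [].
Qed.

Lemma nth_count (s : seq nat) P : sorted geq s -> upward P ->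
  forall i, i < size s -> P (nth 0 s i) = (i < count P s).
Proof.
move=> hs hP; elim: s hs => [|x s IH] hs i //= hi.
have hs' : sorted geq s := path_sorted hs.
have hle := sorted_geq_le hs.
case hx: (P x) => /=.
  case: i hi => [|j] hj //=. rewrite IH //. 
have c0 : count P s = 0.
  apply/eqP; rewrite -leqn0 leqNgt -has_count; apply/hasP => -[y hy Py].
  by rewrite (hP _ _ (hle y hy) Py) in hx.
rewrite c0 ltn0. case: i hi => [|j] hj //=.
apply/negP => Pn. have := hP _ _ (hle _ (mem_nth 0 hj)) Pn. by rewrite hx.
Qed.

Lemma inter_weak (u w : seq nat) P : sorted geq u -> sorted geq w -> upward P ->
  size u <= (size w).+1 ->
  (forall j, j < size w -> j < size u /\ nth 0 w j <= nth 0 u j /\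
      (j.+1 < size u -> nth 0 u j.+1 <= nth 0 w j)) ->
  count P w <= count P u <= (count P w).+1.
Proof.
move=> hu hw hP hs H; apply/andP; split.
  case ek: (count P w) => [|k] //.
  have hk : k < size w by have := count_size P w; lia.
  have Pw : P (nth 0 w k) by rewrite nth_count // ek.
  have [hku [hle _]] := H k hk.
  have Pu := hP _ _ hle Pw.
  by rewrite nth_count in Pu.
rewrite leqNgt; apply/negP => hlt.
set k := count P w in hlt.
have hk1 : k.+1 < size u by have := count_size P u; lia.
have Pu : P (nth 0 u k.+1) by rewrite nth_count //; lia.
have hkw : k < size w by lia.
have [_ [_ h2]] := H k hkw.
have Pw := hP _ _ (h2 hk1) Pu.
rewrite nth_count // in Pw. by rewrite /k ltnn in Pw.
Qed.

Lemma upward_leq t : upward (leq t).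
Proof. move=> x y h1 h2; exact: leq_trans h2 h1. Qed.

Lemma inter_rev (u w : seq nat) : sorted geq u -> sorted geq w ->
  (forall x, x \in u -> x \in w -> False) ->
  (forall t, count (leq t) w <= count (leq t) u <= (count (leq t) w).+1) ->
  size u <= (size w).+1 /\
  (forall j, j < size w -> j < size u /\ nth 0 w j < nth 0 u j /\
      (j.+1 < size u -> nth 0 u j.+1 < nth 0 w j)).
Proof.
move=> hu hw hd H.
have c0 s : count (leq 0) s = size s by rewrite (eq_count (a2 := predT)) ?count_predT.
split. have := H 0; rewrite !c0; lia.
move=> j hj.
have Pw : leq (nth 0 w j) (nth 0 w j) by [].
rewrite (nth_count hw (@upward_leq _) hj) in Pw.
have := H (nth 0 w j); move=> /andP[h1 h2].
have hju : j < count (leq (nth 0 w j)) u by lia.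
have hjs : j < size u by have := count_size (leq (nth 0 w j)) u; lia.
have Pu : leq (nth 0 w j) (nth 0 u j) by rewrite (nth_count _ (@upward_leq _)) //.
split => //; split.
  rewrite ltn_neqAle Pu andbT; apply/negP => /eqP e.
  apply: (hd (nth 0 u j)); [exact: mem_nth | rewrite -e; exact: mem_nth].
move=> hj1; rewrite ltnNge; apply/negP => hle.
have Pu1 : leq (nth 0 u j.+1) (nth 0 u j.+1) by [].
rewrite (nth_count hu (@upward_leq _) hj1) in Pu1.
have := H (nth 0 u j.+1); move=> /andP[h3 h4].
have hjw : j < count (leq (nth 0 u j.+1)) w by lia.
have Pw2 : leq (nth 0 u j.+1) (nth 0 w j) by rewrite (nth_count _ (@upward_leq _)) //.
have e : nth 0 u j.+1 = nth 0 w j by apply/eqP; rewrite eqn_leq Pw2 hle.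
apply: (hd (nth 0 u j.+1)); [exact: mem_nth | rewrite e; exact: mem_nth].
Qed.

Lemma ltFe x s j : ext_lt (Fin x) (entry s j) = (j < size s) && (x < nth 0 s j).
Proof. by rewrite /ext_lt /entry; case: ifP => //= _; rewrite ltnNge. Qed.
Lemma leeF s j x : ext_le (entry s j) (Fin x) = (j < size s) ==> (nth 0 s j <= x).
Proof. by rewrite /entry; case: ifP. Qed.
Lemma leFe x s j : ext_le (Fin x) (entry s j) = (j < size s) && (x <= nth 0 s j).
Proof. by rewrite /entry; case: ifP. Qed.
Lemma lteF s j x : ext_lt (entry s j) (Fin x) = (j < size s) ==> (nth 0 s j < x).
Proof. by rewrite /ext_lt /entry; case: ifP => //= _; rewrite ltnNge. Qed.
Lemma ltFp x s j : ext_lt (Fin x) (prev_entry s j) =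
  if j is j'.+1 then (j' < size s) && (x < nth 0 s j') else true.
Proof. by case: j => [|j]; [done | exact: ltFe]. Qed.
Lemma leFp x s j : ext_le (Fin x) (prev_entry s j) =
  if j is j'.+1 then (j' < size s) && (x <= nth 0 s j') else true.
Proof. by case: j => [|j]; [done | exact: leFe]. Qed.

Definition SP (u w : seq nat) := forall j, j < size w -> j < size u /\
  nth 0 w j < nth 0 u j /\ (j.+1 < size u -> nth 0 u j.+1 < nth 0 w j).
Definition CF (u w : seq nat) := forall t,
  count (leq t) w <= count (leq t) u <= (count (leq t) w).+1.

Lemma SP_CF u w : sorted geq u -> sorted geq w -> size u <= (size w).+1 -> SP u w -> CF u w.
Proof.
move=> hu hw hs H t; apply: (inter_weak hu hw (@upward_leq t) hs) => j hj.
have [h1 [h2 h3]] := H j hj; split => //; split; first exact: ltnW.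
by move=> /h3 /ltnW.
Qed.

Lemma CF_SP u w : sorted geq u -> sorted geq w ->
  (forall x, x \in u -> x \in w -> False) -> CF u w -> SP u w.
Proof. move=> hu hw hd H; exact: (inter_rev hu hw hd H).2. Qed.

Definition ee (f : bool) (v : nat) := if f then 2 * v else 2 * v + 1.
Definition ef (f : bool) (v : nat) := if f then 2 * v + 1 else 2 * v.

Lemma ee_mono f : {homo ee f : x y / geq x y >-> geq x y}.
Proof. by move=> x y /=; rewrite /ee; case: f; lia. Qed.
Lemma ef_mono f : {homo ef f : x y / geq x y >-> geq x y}.
Proof. by move=> x y /=; rewrite /ef; case: f; lia. Qed.

Lemma disj_e_f f (a d : seq nat) x : x \in map (ee f) a -> x \in map (ef f) d -> False.
Proof.
move=> /mapP[v _ ->] /mapP[w _]; rewrite /ee /ef; case: f; lia.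
Qed.

Lemma count_map_leq t g (s : seq nat) :
  count (leq t) (map g s) = count (fun v => t <= g v) s.
Proof. by rewrite count_map. Qed.

Definition Tcond (f : bool) (a d : seq nat) :=
  if f then forall j, j < size d ->
       ext_lt (Fin (nth 0 d j)) (entry a j) /\
       ext_le (entry a j.+1) (Fin (nth 0 d j))
  else forall j, j < size d ->
       ext_le (Fin (nth 0 d j)) (entry a j) /\
       ext_lt (entry a j.+1) (Fin (nth 0 d j)).
Definition Bcond (f : bool) (b c : seq nat) :=
  if f then forall j, j < size c ->
       ext_lt (Fin (nth 0 c j)) (prev_entry b j) /\
       ext_le (entry b j) (Fin (nth 0 c j))
  else forall j, j < size c ->
       ext_le (Fin (nth 0 c j)) (prev_entry b j) /\
       ext_lt (entry b j) (Fin (nth 0 c j)).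

Lemma Tcond_SP f a d : Tcond f a d <-> SP (map (ee f) a) (map (ef f) d).
Proof.
rewrite /Tcond /SP !size_map /ee /ef; case: f; split.
- move=> H j hj; have := H j hj; rewrite ltFe leeF => -[/andP[h1 h2] /implyP h3].
  rewrite (nth_map 0 0 _ h1) (nth_map 0 0 _ hj); split => //; split; first lia.
  move=> h4; rewrite (nth_map 0) //; move: (h3 h4); lia.
- move=> H j hj; have [h1 [h2 h3]] := H j hj.
  move: h2 h3; rewrite (nth_map 0 0 _ h1) (nth_map 0 0 _ hj) ltFe leeF h1 /= => h2 h3.
  split; first lia. apply/implyP => h4; move: (h3 h4); rewrite (nth_map 0) //; lia.
- move=> H j hj; have := H j hj; rewrite leFe lteF => -[/andP[h1 h2] /implyP h3].
  rewrite (nth_map 0 0 _ h1) (nth_map 0 0 _ hj); split => //; split; first lia.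
  move=> h4; rewrite (nth_map 0) //; move: (h3 h4); lia.
- move=> H j hj; have [h1 [h2 h3]] := H j hj.
  move: h2 h3; rewrite (nth_map 0 0 _ h1) (nth_map 0 0 _ hj) leFe lteF h1 /= => h2 h3.
  split; first lia. apply/implyP => h4; move: (h3 h4); rewrite (nth_map 0) //; lia.
Qed.

Lemma Bcond_SP f b c : size b <= size c <= (size b).+1 ->
  Bcond f b c <-> SP (map (ef f) c) (map (ee f) b).
Proof.
move=> /andP[s1 s2].
rewrite /Bcond /SP !size_map /ee /ef; case: f; split.
- move=> H j hj. have hjc : j < size c by lia.
  split => //; rewrite (nth_map 0 0 _ hj) (nth_map 0 0 _ hjc); split.
    have := H j hjc; rewrite leeF hj /= => -[_ h]; lia.
  move=> hj1; rewrite (nth_map 0 0 _ hj1).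
  have := H j.+1 hj1; rewrite ltFp hj /= => -[h _]; lia.
- move=> H j hj; split.
    case: j hj => [|j] hj; first by [].
    have hjb : j < size b by lia.
    have [_ [_ h3]] := H j hjb; move: (h3 hj).
    rewrite (nth_map 0 0 _ hj) (nth_map 0 0 _ hjb) ltFp hjb /=; lia.
  rewrite leeF; case: (ltnP j (size b)) => hjb //=.
  have [_ [h2 _]] := H j hjb; move: h2; rewrite (nth_map 0 0 _ hj) (nth_map 0 0 _ hjb); lia.
- move=> H j hj. have hjc : j < size c by lia.
  split => //; rewrite (nth_map 0 0 _ hj) (nth_map 0 0 _ hjc); split.
    have := H j hjc; rewrite lteF hj /= => -[_ h]; lia.
  move=> hj1; rewrite (nth_map 0 0 _ hj1).
  have := H j.+1 hj1; rewrite leFp hj /= => -[h _]; lia.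
- move=> H j hj; split.
    case: j hj => [|j] hj; first by [].
    have hjb : j < size b by lia.
    have [_ [_ h3]] := H j hjb; move: (h3 hj).
    rewrite (nth_map 0 0 _ hj) (nth_map 0 0 _ hjb) leFp hjb /=; lia.
  rewrite lteF; case: (ltnP j (size b)) => hjb //=.
  have [_ [h2 _]] := H j hjb; move: h2; rewrite (nth_map 0 0 _ hj) (nth_map 0 0 _ hjb); lia.
Qed.

Definition R1 (Y : symbol) (p : pred nat) := [seq x <- Y.1 | ~~ p x] ++ [seq x <- Y.2 | p x].
Definition R2 (Y : symbol) (p : pred nat) := [seq x <- Y.2 | ~~ p x] ++ [seq x <- Y.1 | p x].
Definition movP (Y : symbol) (p : pred nat) : symbol := (sort geq (R1 Y p), sort geq (R2 Y p)).

Lemma moveSE Y M : moveS Y M = movP Y (fun x => x \in M).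
Proof. by []. Qed.

Lemma movP_ext Y p q : p =1 q -> movP Y p = movP Y q.
Proof.
by move=> h; rewrite /movP /R1 /R2 !(eq_filter h) !(@eq_filter _ (fun x => ~~ p x) (fun x => ~~ q x)) // => x; rewrite h.
Qed.

Lemma count_split (Q p : pred nat) s : count Q [seq x <- s | ~~ p x] + count Q [seq x <- s | p x] = count Q s.
Proof. elim: s => [|x s IH] //=; case: (p x) => /=; case: (Q x) => /=; lia. Qed.

Lemma count_xor (Q p1 p2 p3 : pred nat) s :
  count Q [seq x <- s | p1 x (+) p2 x (+) p3 x] + count Q [seq x <- s | p1 x] +
  count Q [seq x <- s | p2 x] + count Q [seq x <- s | p3 x] =
  2 * (count Q [seq x <- s | p1 x || p2 x || p3 x] + count Q [seq x <- s | p1 x && p2 x && p3 x]).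
Proof.
elim: s => [|x s IH] //=; case: (p1 x); case: (p2 x); case: (p3 x) => /=; case: (Q x) => /=; lia.
Qed.

Definition cnt (g : nat -> nat) (t : nat) (s : seq nat) := count (fun v => t <= g v) s.

Definition boxn (a b c d : nat) := d <= a <= d.+1 /\ b <= c <= b.+1.

Definition box f Z Z' p n t :=
  boxn (cnt (ee f) t (R1 Z p)) (cnt (ee f) t (R2 Z p)) (cnt (ef f) t (R1 Z' n)) (cnt (ef f) t (R2 Z' n)).

Lemma step (a b c d a' b' c' d' a1 b1 c1 d1 a1' b1' c1' d1' a2 b2 c2 d2 a3 b3 c3 d3 E F E' F' y1 y2 z1 z2 : nat) :
 boxn a' b' c' d' -> boxn a1 b1 c1 d1 -> boxn a1' b1' c1' d1' -> boxn a2 b2 c2 d2 -> boxn a3 b3 c3 d3 ->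
 a + b = E -> a1 + b1 = E -> a2 + b2 = E -> a3 + b3 = E ->
 c + d = F -> c1 + d1 = F -> c2 + d2 = F -> c3 + d3 = F ->
 a' + b' = E' -> a1' + b1' = E' -> c' + d' = F' -> c1' + d1' = F' ->
 a' <= a -> b' <= b -> c' <= c -> d' <= d ->
 (a = a' /\ b = b') \/ (c = c' /\ d = d') ->
 a + a1 + a2 + a3 + 2 * y1 = 2 * y2 -> d + d1 + d2 + d3 + 2 * z1 = 2 * z2 ->
 boxn a b c d.
Proof.
move=> H1 H2 H3 H4 H5 H6 H7 H8 H9 H10 H11 H12 H13 H14 H15 H16 H17 H18 H19 H20 H21 H22 h1 h2.
have e1 : a + a1 + a2 + a3 = 2 * (y2 - y1) by lia.
have e2 : d + d1 + d2 + d3 = 2 * (z2 - z1) by lia.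
clear h1 h2; rewrite /boxn in H1 H2 H3 H4 H5 *; lia.
Qed.

Lemma geq_total' : total geq.
Proof. by move=> x y /=; rewrite leq_total. Qed.

Lemma size_R Y p : size (R1 Y p) + size (R2 Y p) = size Y.1 + size Y.2.
Proof.
rewrite /R1 /R2 !size_cat.
have := count_split predT p Y.1; have := count_split predT p Y.2; rewrite !count_predT; lia.
Qed.

Lemma cnt0 g s : cnt g 0 s = size s.
Proof. by rewrite /cnt -count_predT; apply: eq_count. Qed.

Lemma cnt_sort g t s : count (leq t) (map g (sort geq s)) = cnt g t s.
Proof. by rewrite count_map_leq; apply/permP; rewrite perm_sort. Qed.

Lemma BplusE Z Z' L L' : Bplus Z Z' L L' <->
  (defect L' = 1 - defect L)%R /\ Tcond (size Z'.1 == size Z.2) L.1 L'.2 /\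
  Bcond (size Z'.1 == size Z.2) L.2 L'.1.
Proof. by rewrite /Bplus /Tcond /Bcond; case: (size Z'.1 == size Z.2). Qed.

Section Main.
Variables (Z Z' : symbol) (f : bool).
Hypothesis hf : f = (size Z'.1 == size Z.2).
Hypothesis hsz : size Z.1 + size Z.2 + ~~ f = size Z'.1 + size Z'.2 + f.

Lemma Vbox p n : Bplus Z Z' (movP Z p) (movP Z' n) <-> forall t, box f Z Z' p n t.
Proof.
rewrite BplusE -hf /= /box /defect /=.
have sa s : sorted geq (sort geq s) := sort_sorted geq_total' s.
have sm g s : {homo g : x y / geq x y >-> geq x y} -> sorted geq (map g (sort geq s)).
  by move=> hg; apply: (homo_sorted hg); apply: sa.
have hZ := size_R Z p; have hZ' := size_R Z' n.
rewrite !size_sort.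
split.
  move=> [hdef [hT hB]] t.
  have hs1 : size (R1 Z p) = size (R2 Z' n) + f by move: hsz hdef; case: f; lia.
  have hs2 : size (R1 Z' n) = size (R2 Z p) + ~~ f by move: hsz hdef; case: f; lia.
  move/Tcond_SP: hT => hT.
  have := SP_CF (sm _ _ (ee_mono f)) (sm _ _ (ef_mono f)) _ hT t.
  rewrite !size_map !size_sort hs1 !cnt_sort => H1.
  have H1' := H1 ltac:(case: (f); lia).
  move/Bcond_SP: hB; rewrite !size_sort => hB.
  have hB' := hB ltac:(rewrite hs2; case: (~~ f); lia).
  have := SP_CF (sm _ _ (ef_mono f)) (sm _ _ (ee_mono f)) _ hB' t.
  rewrite !size_map !size_sort hs2 !cnt_sort => H2.
  have H2' := H2 ltac:(case: (~~ f); lia).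
  by split.
move=> H.
have [h1 h2] := H 0; rewrite !cnt0 in h1 h2.
have hs1 : size (R1 Z p) = size (R2 Z' n) + f by move: hsz; case: f; lia.
have hs2 : size (R1 Z' n) = size (R2 Z p) + ~~ f by move: hsz; case: f; lia.
split; first by move: hs1 hs2 hZ hZ'; case: f => /=; lia.
split.
  apply/Tcond_SP; apply: CF_SP; [exact: sm (ee_mono f) | exact: sm (ef_mono f) | |].
    by move=> x; apply: disj_e_f.
  by move=> t; rewrite !cnt_sort; case: (H t).
apply/Bcond_SP; first by rewrite !size_sort hs2; case: (~~ f); lia.
apply: CF_SP; [exact: sm (ef_mono f) | exact: sm (ee_mono f) | |].
  by move=> x h1' h2'; apply: (disj_e_f h2' h1').
by move=> t; rewrite !cnt_sort; case: (H t).
Qed.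


End Main.

Lemma cnt_tot g t Y p : cnt g t (R1 Y p) + cnt g t (R2 Y p) = cnt g t Y.1 + cnt g t Y.2.
Proof.
rewrite /cnt /R1 /R2 !count_cat.
have := count_split (fun v => t <= g v) p Y.1; have := count_split (fun v => t <= g v) p Y.2; lia.
Qed.

Lemma cnt_mono g t s : cnt g t.+1 s <= cnt g t s.
Proof. by apply: sub_count => v /= h; apply: ltnW. Qed.

Lemma level f t : (forall v, (t <= ee f v) = (t.+1 <= ee f v)) \/
                  (forall v, (t <= ef f v) = (t.+1 <= ef f v)).
Proof.
have := odd_double_half t; rewrite -muln2.
case: (odd t) => /= ht; case: f; rewrite /ee /ef.
- by left => v; apply/idP/idP; lia.
- by right => v; apply/idP/idP; lia.
- by right => v; apply/idP/idP; lia.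
- by left => v; apply/idP/idP; lia.
Qed.

Lemma par (Q : pred nat) s1 s2 (p1 p2 p3 : pred nat) :
  exists y1 y2,
  count Q ([seq x <- s1 | ~~ (p1 x (+) p2 x (+) p3 x)] ++ [seq x <- s2 | p1 x (+) p2 x (+) p3 x]) +
  count Q ([seq x <- s1 | ~~ p1 x] ++ [seq x <- s2 | p1 x]) +
  count Q ([seq x <- s1 | ~~ p2 x] ++ [seq x <- s2 | p2 x]) +
  count Q ([seq x <- s1 | ~~ p3 x] ++ [seq x <- s2 | p3 x]) + 2 * y1 = 2 * y2.
Proof.
rewrite !count_cat.
have h4 := count_split Q (fun x => p1 x (+) p2 x (+) p3 x) s1.
have h1 := count_split Q p1 s1; have h2 := count_split Q p2 s1; have h3 := count_split Q p3 s1.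
have x1 := count_xor Q p1 p2 p3 s1; have x2 := count_xor Q p1 p2 p3 s2.
exists (count Q [seq x <- s1 | p1 x || p2 x || p3 x] + count Q [seq x <- s1 | p1 x && p2 x && p3 x]).
exists (2 * count Q s1 + (count Q [seq x <- s2 | p1 x || p2 x || p3 x] + count Q [seq x <- s2 | p1 x && p2 x && p3 x])).
lia.
Qed.

Lemma mem_sumn s v : v \in s -> v <= sumn s.
Proof. elim: s => //= x s IH; rewrite in_cons => /orP[/eqP->|/IH]; lia. Qed.

Lemma cnt_big g t Y p : (forall v, g v <= 2 * v + 1) -> 2 * sumn (Y.1 ++ Y.2) + 2 <= t ->
  cnt g t (R1 Y p) = 0 /\ cnt g t (R2 Y p) = 0.
Proof.
move=> hg ht.
have H s : (forall v, v \in s -> v \in Y.1 ++ Y.2) -> count (fun v => t <= g v) s = 0.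
  move=> hs; apply/eqP; rewrite -leqn0 leqNgt -has_count; apply/hasP => -[v hv hT].
  have := mem_sumn (hs v hv); have := hg v; lia.
split; apply: H => v; rewrite !mem_cat !mem_filter => /orP[/andP[_ ->]|/andP[_ ->]] //; by rewrite orbT.
Qed.

Lemma ee_bound f v : ee f v <= 2 * v + 1. Proof. by rewrite /ee; case: f; lia. Qed.
Lemma ef_bound f v : ef f v <= 2 * v + 1. Proof. by rewrite /ef; case: f; lia. Qed.

Lemma affine f Z Z' (p1 p2 p3 n1 n2 n3 : pred nat) :
 (forall t, box f Z Z' p1 n1 t) -> (forall t, box f Z Z' p2 n2 t) -> (forall t, box f Z Z' p3 n3 t) ->
 forall t, box f Z Z' (fun x => p1 x (+) p2 x (+) p3 x) (fun x => n1 x (+) n2 x (+) n3 x) t.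
Proof.
move=> B1 B2 B3.
set p4 := (fun x => _); set n4 := (fun x => _).
pose T := 2 * sumn ((Z.1 ++ Z.2) ++ (Z'.1 ++ Z'.2)) + 2.
suff H : forall k t, T <= t + k -> box f Z Z' p4 n4 t by move=> t; apply: (H T); lia.
elim => [|k IH] t ht.
  have e : sumn ((Z.1 ++ Z.2) ++ (Z'.1 ++ Z'.2)) = sumn (Z.1 ++ Z.2) + sumn (Z'.1 ++ Z'.2) by rewrite sumn_cat.
  rewrite /box.
  have i1 : 2 * sumn (Z.1 ++ Z.2) + 2 <= t by rewrite /T in ht; lia.
  have i2 : 2 * sumn (Z'.1 ++ Z'.2) + 2 <= t by rewrite /T in ht; lia.
  have [-> ->] := cnt_big p4 (ee_bound f) i1.
  by have [-> ->] := cnt_big n4 (ef_bound f) i2.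
have hb4 := IH t.+1 ltac:(lia).
have hb1 := B1 t; have hb1' := B1 t.+1; have hb2 := B2 t; have hb3 := B3 t.
rewrite /box in hb4 hb1 hb1' hb2 hb3 *.
have [y1 [y2 hy]] := par (fun v => t <= ee f v) Z.1 Z.2 p1 p2 p3.
have [z1 [z2 hz]] := par (fun v => t <= ef f v) Z'.2 Z'.1 n1 n2 n3.
have lv : (cnt (ee f) t (R1 Z p4) = cnt (ee f) t.+1 (R1 Z p4) /\
           cnt (ee f) t (R2 Z p4) = cnt (ee f) t.+1 (R2 Z p4)) \/
          (cnt (ef f) t (R1 Z' n4) = cnt (ef f) t.+1 (R1 Z' n4) /\
           cnt (ef f) t (R2 Z' n4) = cnt (ef f) t.+1 (R2 Z' n4)).
  by case: (level f t) => h; [left|right]; split; apply: eq_count => v; exact: h v.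
exact: (step hb4 hb1 hb1' hb2 hb3
  (cnt_tot _ _ _ _) (cnt_tot _ _ _ _) (cnt_tot _ _ _ _) (cnt_tot _ _ _ _)
  (cnt_tot _ _ _ _) (cnt_tot _ _ _ _) (cnt_tot _ _ _ _) (cnt_tot _ _ _ _)
  (cnt_tot _ _ _ _) (cnt_tot _ _ _ _) (cnt_tot _ _ _ _) (cnt_tot _ _ _ _)
  (cnt_mono _ _ _) (cnt_mono _ _ _) (cnt_mono _ _ _) (cnt_mono _ _ _) lv hy hz).
Qed.

Lemma cnt_R0 g t Y : cnt g t (R1 Y (fun _ => false)) = cnt g t Y.1 /\ cnt g t (R2 Y (fun _ => false)) = cnt g t Y.2.
Proof.
rewrite /cnt /R1 /R2 !count_cat.
have e s : [seq x <- s | ~~ false] = s by elim: s => //= x s ->.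
have e' s : [seq x <- s | false] = [::] by elim: s.
by rewrite !e !e' /= !addn0.
Qed.

Lemma sdecr_geq s : sdecr s -> sorted geq s.
Proof. by apply: sub_sorted => x y /= /ltnW. Qed.

Lemma zero_box f Z Z' p n : special1 Z -> special0 Z' ->
  (forall t, box f Z Z' p n t) -> forall t, box f Z Z' (fun _ => false) (fun _ => false) t.
Proof.
move=> [s1 [s2 [sz H1]]] [s1' [s2' [sz' [H2 H3]]]] B t.
have := B t; rewrite /box; have [-> ->] := cnt_R0 (ee f) t Z; have [-> ->] := cnt_R0 (ef f) t Z'.
have e1 := cnt_tot (ee f) t Z p; have e2 := cnt_tot (ef f) t Z' n.
have al : cnt (ee f) t Z.2 <= cnt (ee f) t Z.1 <= (cnt (ee f) t Z.2).+1.
  apply: inter_weak; [exact: sdecr_geq | exact: sdecr_geq | | by rewrite sz | ].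
    by move=> x y hxy /= h; apply: leq_trans h (ee_mono _ _); rewrite /=.
  move=> j hj; have [h1 h2] := H1 j hj; rewrite sz; split; first exact: ltnW.
  by split.
have ga : cnt (ef f) t Z'.2 <= cnt (ef f) t Z'.1 <= (cnt (ef f) t Z'.2).+1.
  apply: inter_weak; [exact: sdecr_geq | exact: sdecr_geq | | by rewrite sz' | ].
    by move=> x y hxy /= h; apply: leq_trans h (ef_mono _ _); rewrite /=.
  move=> j hj; rewrite sz'; split => //; split; first exact: H2.
  by move=> hj1; apply: H3; rewrite sz'.
rewrite /boxn; move: e1 e2 al ga; lia.
Qed.

Lemma mem_symdiff (M1 M2 : seq nat) x : (x \in symdiff M1 M2) = (x \in M1) (+) (x \in M2).
Proof. by rewrite mem_filter mem_cat; case: (x \in M1); case: (x \in M2). Qed.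

Lemma all_symdiff (P : pred nat) M1 M2 : all P M1 -> all P M2 -> all P (symdiff M1 M2).
Proof.
move=> h1 h2; apply/allP => x; rewrite mem_filter mem_cat => /andP[_ /orP[h|h]].
  exact: (allP h1). exact: (allP h2).
Qed.

Lemma movP0 Y : sorted geq Y.1 -> sorted geq Y.2 -> movP Y (fun _ => false) = Y.
Proof.
case: Y => y1 y2 /= h1 h2; rewrite /movP /R1 /R2 /=.
have e s : [seq x <- s | ~~ false] = s by elim: s => //= x s ->.
have e' s : [seq x <- s | false] = [::] by elim: s.
by rewrite !e !e' !cats0 !(sorted_sort geq_trans').
Qed.

Lemma moveS_nil Y : sorted geq Y.1 -> sorted geq Y.2 -> moveS Y [::] = Y.
Proof. by move=> h1 h2; rewrite moveSE (@movP_ext _ _ (fun _ => false)) // movP0. Qed.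

Theorem proposition0810 (Z Z' : symbol) :
  special1 Z -> special0 Z' ->
  (size Z'.1 = size Z.2 \/ size Z'.1 = (size Z.2).+1) ->
  (exists L L', Drel Z Z' L L') ->
  (* (i) *)
  (forall (M N0 : seq nat), all (inI Z) M -> all (inI Z') N0 ->
     Bplus Z Z' (moveS Z M) (moveS Z' N0) ->
     forall L'' : symbol,
       (inSbar Z' L'' /\ Bplus Z Z' (moveS Z M) L'') <->
       (exists N1 : seq nat, all (inI Z') N1 /\ Drel Z Z' Z (moveS Z' N1) /\
          L'' = moveS Z' (symdiff N0 N1))) /\
  (* (ii) *)
  (forall (N M0 : seq nat), all (inI Z') N -> all (inI Z) M0 ->
     Bplus Z Z' (moveS Z M0) (moveS Z' N) ->
     forall L'' : symbol,
       (inSbar Z L'' /\ Bplus Z Z' L'' (moveS Z' N)) <->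
       (exists M1 : seq nat, all (inI Z) M1 /\ Drel Z Z' (moveS Z M1) Z' /\
          L'' = moveS Z (symdiff M0 M1))).
Proof.
move=> hZ hZ' hm [L [L' [[[Ms [hMs ->]] _] [[[Ns [hNs ->]] _] hD]]]].
have hZc := hZ; have hZc' := hZ'.
move: hZc hZc' => [s1 [s2 [sz _]]] [s1' [s2' [sz' _]]].
set f := (size Z'.1 == size Z.2).
have hf : f = (size Z'.1 == size Z.2) by [].
have hsz : size Z.1 + size Z.2 + ~~ f = size Z'.1 + size Z'.2 + f.
  rewrite /f; case: hm => e; rewrite e ?eqxx /=; first lia.
  by rewrite (_ : (size Z.2).+1 == size Z.2 = false) /=; [lia | apply/negbTE; rewrite gtn_eqF].
have VB := Vbox hf hsz.
have Aff p1 n1 p2 n2 p3 n3 :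
  Bplus Z Z' (movP Z p1) (movP Z' n1) -> Bplus Z Z' (movP Z p2) (movP Z' n2) ->
  Bplus Z Z' (movP Z p3) (movP Z' n3) ->
  Bplus Z Z' (movP Z (fun x => p1 x (+) p2 x (+) p3 x)) (movP Z' (fun x => n1 x (+) n2 x (+) n3 x)).
  by move=> /VB h1 /VB h2 /VB h3; apply/VB; apply: affine.
have V0 : Bplus Z Z' (movP Z (fun _ => false)) (movP Z' (fun _ => false)).
  apply/VB; apply: (zero_box hZ hZ'); apply/VB; exact: hD.
have g1 := sdecr_geq s1; have g2 := sdecr_geq s2; have g1' := sdecr_geq s1'; have g2' := sdecr_geq s2'.
have defZ : defect Z = 1%R by rewrite /defect sz; lia.
have defZ' : defect Z' = 0%R by rewrite /defect sz'; lia.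
have inZ : inSbar Z Z by exists [::]; rewrite moveS_nil.
have inZ' : inSbar Z' Z' by exists [::]; rewrite moveS_nil.
split.
- move=> M N0 hM hN0 hB L''; split.
  + move=> [[N [hN ->]] hB2].
    have hB' : Bplus Z Z' Z (moveS Z' (symdiff N0 N)).
      have := Aff _ _ _ _ _ _ hB hB2 V0.
      rewrite (@movP_ext Z _ (fun _ => false)); last by move=> x; case: (x \in M).
      rewrite movP0 // moveSE; congr Bplus; apply: movP_ext => x.
      by rewrite mem_symdiff; case: (x \in N0); case: (x \in N).
    exists (symdiff N0 N); split; first exact: all_symdiff.
    split.
      split; first by split.
      split; last exact: hB'.
      split; first by exists (symdiff N0 N); split => //; exact: all_symdiff.
      have [hdef _] := (BplusE _ _ _ _).1 hB'; by rewrite defZ GRing.subrr in hdef.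
    rewrite !moveSE; apply: movP_ext => x.
    by rewrite !mem_symdiff; case: (x \in N0); case: (x \in N).
  + move=> [N1 [hN1 [[_ [_ hB1]] ->]]]; split.
      by exists (symdiff N0 N1); split => //; exact: all_symdiff.
    have hB1' : Bplus Z Z' (movP Z (fun _ => false)) (movP Z' (fun x => x \in N1)) by rewrite movP0.
    have := Aff _ _ _ _ _ _ hB hB1' V0.
    rewrite !moveSE (@movP_ext Z _ (fun x => x \in M)); last by move=> x; case: (x \in M).
    congr Bplus; apply: movP_ext => x.
    by rewrite mem_symdiff; case: (x \in N0); case: (x \in N1).
- move=> N M0 hN hM0 hB L''; split.
  + move=> [[M [hM ->]] hB2].
    have hB' : Bplus Z Z' (moveS Z (symdiff M0 M)) Z'.
      have := Aff _ _ _ _ _ _ hB hB2 V0.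
      rewrite (@movP_ext Z' _ (fun _ => false)); last by move=> x; case: (x \in N).
      rewrite movP0 // moveSE; congr Bplus; apply: movP_ext => x.
      by rewrite mem_symdiff; case: (x \in M0); case: (x \in M).
    exists (symdiff M0 M); split; first exact: all_symdiff.
    split.
      split.
        split; first by exists (symdiff M0 M); split => //; exact: all_symdiff.
        have [hdef _] := (BplusE _ _ _ _).1 hB'; move: hdef; rewrite defZ' => /eqP; rewrite eq_sym GRing.subr_eq0 => /eqP e; by rewrite -e.
      split; last exact: hB'.
      by split.
    rewrite !moveSE; apply: movP_ext => x.
    by rewrite !mem_symdiff; case: (x \in M0); case: (x \in M).
  + move=> [M1 [hM1 [[_ [_ hB1]] ->]]]; split.
      by exists (symdiff M0 M1); split => //; exact: all_symdiff.
    have hB1' : Bplus Z Z' (movP Z (fun x => x \in M1)) (movP Z' (fun _ => false)) by rewrite movP0.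
    have := Aff _ _ _ _ _ _ hB hB1' V0.
    rewrite !moveSE (@movP_ext Z' _ (fun x => x \in N)); last by move=> x; case: (x \in N).
    congr Bplus; apply: movP_ext => x.
    by rewrite mem_symdiff; case: (x \in M0); case: (x \in M1).
Qed.
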